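(* Consider the delayed online learning protocol of the context. Assume the maximum delay is bounded by $\tau$, i.e. $\{1,\dots,t-\tau-1\}\subset\mathcal S_t$ for all $t$, and that $\|g_t\|_*\le G$ for all $t$. Let DDA be run with learning rates $\eta_t=\dfrac{r}{G\sqrt{t(1+2\tau)}}$. Then for every $p\in\mathcal X$ with $h(p)\le r^2$, \[R_T(p)\le 2rG\sqrt{T(1+2\tau)}.\]
   Context: Let $\mathcal V$ be a finite-dimensional real vector space with norm $\|\cdot\|$ and dual norm $\|\cdot\|_*$, and $\mathcal X\subset\mathcal V$ closed convex. A regularizer $h:\mathcal V\to\mathbb R\cup\{+\infty\}$ is lower semicontinuous, $1$-strongly convex w.r.t. $\|\cdot\|$ on $\mathcal X$, with $\mathcal X\subset\operatorname{dom}h$, whose subdifferential admits a continuous selection, and $h\ge0$. Protocol: at each round $t=1,\dots,T$ one agent $i(t)$ is active, plays $x_t\in\mathcal X$, incurs $f_t(x_t)$ ($f_t$ convex, $\mathcal X\subset\operatorname{dom}\partial f_t$); a subgradient $g_t\in\partial f_t(x_t)$ is revealed later. $\mathcal S^i_t\subset\{1,\dots,t-1\}$: timestamps of subgradients available to agent $i$ at time $t$, nondecreasing in $t$; $\mathcal S_t=\mathcal S^{i(t)}_t$. DDA: $x_t=\arg\min_{x\in\mathcal X}\{\sum_{s\in\mathcal S_t}\langle g_s,x\rangle+h(x)/\eta_t\}$. Regret: $R_T(p)=\sum_{t=1}^T f_t(x_t)-\sum_{t=1}^T f_t(p)$. Here $r>0$ and $G>0$ are constants. *)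

(* Defs.v *)
From HB Require Import structures.
From mathcomp Require Import all_boot all_order all_algebra.
From mathcomp Require Import all_classical all_reals all_analysis.
Set Implicit Arguments. Unset Strict Implicit. Unset Printing Implicit Defensive.
Import Order.TTheory GRing.Theory Num.Theory.
Import numFieldNormedType.Exports.
Local Open Scope classical_set_scope.
Local Open Scope ring_scope.

(* The finite-dimensional real vector space V is modelled as 'rV[R]_n;
   its dual is identified with 'rV[R]_n through the canonical pairing. *)
Definition pairing (R : realType) (n : nat) (g x : 'rV[R]_n) : R :=
  \sum_(i < n) g 0 i * x 0 i.

Definition is_norm (R : realType) (n : nat) (nrm : 'rV[R]_n -> R) : Prop :=
  [/\ forall x, 0 <= nrm x,
      forall x, nrm x = 0 -> x = 0,
      forall (a : R) x, nrm (a *: x) = `|a| * nrm x &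
      forall x y, nrm (x + y) <= nrm x + nrm y].

Definition dual_norm (R : realType) (n : nat) (nrm : 'rV[R]_n -> R)
  (g : 'rV[R]_n) : R :=
  sup [set pairing g x | x in [set x | nrm x <= 1]].

Definition convex_set (R : realType) (n : nat) (X : set 'rV[R]_n) : Prop :=
  forall x y (l : R), X x -> X y -> 0 <= l <= 1 -> X (l *: x + (1 - l) *: y).

Definition convex_efun (R : realType) (n : nat) (f : 'rV[R]_n -> \bar R) : Prop :=
  forall x y : 'rV[R]_n, forall l : R, 0 <= l <= 1 ->
    (f (l *: x + (1 - l) *: y)%R <= l%:E * f x + (1 - l)%:E * f y)%E.

Definition strongly_convex_on (R : realType) (n : nat) (nrm : 'rV[R]_n -> R)
  (X : set 'rV[R]_n) (h : 'rV[R]_n -> \bar R) : Prop :=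
  forall x y : 'rV[R]_n, forall l : R, X x -> X y -> 0 <= l <= 1 ->
    (h (l *: x + (1 - l) *: y)%R <=
       l%:E * h x + (1 - l)%:E * h y - (l * (1 - l) / 2 * nrm (x - y) ^+ 2)%:E)%E.

Definition subgrad (R : realType) (n : nat) (f : 'rV[R]_n -> \bar R)
  (x g : 'rV[R]_n) : Prop :=
  f x \is a fin_num /\ forall y, (f x + (pairing g (y - x)%R)%:E <= f y)%E.

Definition dom_subdiff (R : realType) (n : nat) (f : 'rV[R]_n -> \bar R)
  : set 'rV[R]_n := [set x | exists g, subgrad f x g].

Definition dom (R : realType) (n : nat) (f : 'rV[R]_n -> \bar R)
  : set 'rV[R]_n := [set x | f x < +oo]%E.

(* Main.v *)
Require Import Defs.
From HB Require Import structures.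
From mathcomp Require Import all_boot all_order all_algebra.
From mathcomp Require Import all_classical all_reals all_analysis.
From mathcomp Require Import ring lra.
Import Order.TTheory GRing.Theory Num.Theory.
Import numFieldNormedType.Exports.
Local Open Scope classical_set_scope.
Local Open Scope ring_scope.
From mathcomp Require Import zify.
Set Implicit Arguments.
Unset Strict Implicit.
Section NormSec.
Variables (R : realType) (n : nat) (nrm : 'rV[R]_n -> R).
Hypothesis Hn : is_norm nrm.

Lemma nrm_ge0 x : 0 <= nrm x. Proof. by case: Hn. Qed.
Lemma nrm_eq0 x : nrm x = 0 -> x = 0. Proof. by case: Hn => _ H _ _; apply: H. Qed.
Lemma nrmZ a x : nrm (a *: x) = `|a| * nrm x. Proof. by case: Hn => _ _ H _; apply: H. Qed.
Lemma nrmD x y : nrm (x + y) <= nrm x + nrm y. Proof. by case: Hn => _ _ _ H; apply: H. Qed.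
Lemma nrm0 : nrm 0 = 0.
Proof. by rewrite -(scale0r (0 : 'rV[R]_n)) nrmZ normr0 mul0r. Qed.
Lemma nrmN x : nrm (- x) = nrm x.
Proof. by rewrite -scaleN1r nrmZ normrN normr1 mul1r. Qed.

Lemma nrm_sum (I : Type) (r : seq I) (P : pred I) (F : I -> 'rV[R]_n) :
  nrm (\sum_(i <- r | P i) F i) <= \sum_(i <- r | P i) nrm (F i).
Proof.
elim/big_rec2: _ => [|i y1 y2 _ H]; first by rewrite nrm0.
by apply: le_trans (nrmD _ _) _; rewrite lerD2l.
Qed.

Definition Kn := \sum_(j < n) nrm ('e_j : 'rV[R]_n).

Lemma entry_le (x : 'rV[R]_n) j : `|x 0 j| <= `|x|.
Proof.
have /mapP[k Hk ->] : `|x 0 j| \in [seq `|x ij.1 ij.2| | ij : 'I_1 * 'I_n].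
  by apply/mapP; exists (0, j) => //=; rewrite mem_enum.
by rewrite [leRHS]/Num.norm /= mx_normrE; apply/bigmax_geP; right => /=; exists k.
Qed.

Lemma nrm_upper x : nrm x <= Kn * `|x|.
Proof.
rewrite {1}(row_sum_delta x); apply: le_trans; first exact: nrm_sum.
rewrite /Kn mulr_suml; apply: ler_sum => j _; rewrite nrmZ mulrC ler_wpM2l ?nrm_ge0 //.
exact: entry_le.
Qed.

Lemma nrm_cont : continuous nrm.
Proof.
move=> x; apply/(@cvgrPdist_lt _ _ _ (nbhs x)) => e e0.
have K0 : 0 < Kn + 1 by rewrite ltr_wpDl // sumr_ge0 // => j _; exact: nrm_ge0.
near=> y.
have H1 : `|nrm x - nrm y| <= nrm (x - y).
  have a1 := nrmD (y - x) x; have a2 := nrmD (x - y) y.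
  rewrite subrK in a1; rewrite subrK in a2.
  have a3 : nrm (y - x) = nrm (x - y) by rewrite -opprB nrmN.
  rewrite ler_distl; apply/andP; split.
    by rewrite lerBlDr addrC -a3.
  by rewrite addrC.
apply: (le_lt_trans H1); apply: (le_lt_trans (nrm_upper _)).
have : `|x - y| < e / (Kn + 1).
  by near: y; apply: cvgr_dist_lt => //; rewrite divr_gt0.
move=> Hxy.
have Kn0 : 0 <= Kn by rewrite sumr_ge0 // => j _; exact: nrm_ge0.
rewrite ltr_pdivlMr // in Hxy.
apply: le_lt_trans Hxy.
rewrite mulrC ler_wpM2l //; last by rewrite lerDl.
Unshelve. all: by end_near.
Qed.
End NormSec.
Section NormSec2.
Variables (R : realType) (n : nat) (nrm : 'rV[R]_n -> R).
Hypothesis Hn : is_norm nrm.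

Lemma nrm_lower : exists2 c, 0 < c & forall x, c * `|x| <= nrm x.
Proof.
pose S := [set x : 'rV[R]_n | `|x| = 1].
have scale x : x != 0 -> S (`|x|^-1 *: x) by move=> x0; rewrite /S /= normfZV.
have [[z Sz]|S0] := pselect (S !=set0); last first.
  exists 1 => // x; have [->|x0] := eqVneq x 0; first by rewrite normr0 mulr0 nrm_ge0.
  by exfalso; apply: S0; exists (`|x|^-1 *: x); exact: scale.
have cS : compact S.
  apply: bounded_closed_compact.
    exists 1; split => // M M1 x /= ->; exact: ltW.
  have -> : S = (fun x : 'rV[R]_n => `|x|) @^-1` [set y | y = 1] by [].
  by apply: (proj1 (continuous_closedP _)); [exact: norm_continuous | exact: closed_eq].
have [c Sc cmin] := EVT_min_rV (ex_intro _ z Sz) cS (continuous_subspaceT (nrm_cont Hn)).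
rewrite inE /S /= in Sc.
have c0 : c != 0 by apply/eqP => c0; move: Sc; rewrite c0 normr0 => /eqP; rewrite eq_sym oner_eq0.
have nc0 : 0 < nrm c by rewrite lt_def nrm_ge0 // andbT; apply/eqP => /(nrm_eq0 Hn) /eqP; rewrite (negbTE c0).
exists (nrm c) => // x; have [->|x0] := eqVneq x 0; first by rewrite normr0 mulr0 nrm_ge0.
have := cmin _ (mem_set (scale x x0)); rewrite (nrmZ Hn) normfV normr_id.
have nx0 : 0 < `|x| by rewrite normr_gt0.
by rewrite ler_pdivlMl // mulrC.
Qed.
End NormSec2.
Section Pairing.
Variables (R : realType) (n : nat).
Implicit Types (g x y : 'rV[R]_n).
Lemma pairingD g x y : pairing g (x + y) = pairing g x + pairing g y.
Proof. by rewrite /pairing -big_split; apply: eq_bigr => i _; rewrite mxE mulrDr. Qed.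
Lemma pairingZ g a x : pairing g (a *: x) = a * pairing g x.
Proof. by rewrite /pairing mulr_sumr; apply: eq_bigr => i _; rewrite mxE mulrCA. Qed.
Lemma pairingN g x : pairing g (- x) = - pairing g x.
Proof. by rewrite -scaleN1r pairingZ mulN1r. Qed.
Lemma pairingB g x y : pairing g (x - y) = pairing g x - pairing g y.
Proof. by rewrite pairingD pairingN. Qed.
Lemma pairing0 g : pairing g 0 = 0.
Proof. by rewrite -(scale0r (0 : 'rV[R]_n)) pairingZ mul0r. Qed.
End Pairing.

Section Dual.
Variables (R : realType) (n : nat) (nrm : 'rV[R]_n -> R).
Hypothesis Hn : is_norm nrm.

Lemma dual_has_sup g : has_sup [set pairing g x | x in [set x | nrm x <= 1]].
Proof.
have [c c0 Hc] := nrm_lower Hn.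
split.
  exists 0, 0; last exact: pairing0.
  by rewrite /= nrm0.
exists ((\sum_i `|g 0 i|) / c) => _ [x /= Hx <-].
apply: (@le_trans _ _ ((\sum_i `|g 0 i|) * `|x|)).
  rewrite /pairing mulr_suml; apply: ler_sum => i _.
  apply: le_trans (ler_norm _) _; rewrite normrM ler_wpM2l //; exact: entry_le.
have sg0 : 0 <= \sum_i `|g 0 i| by apply: sumr_ge0.
apply: ler_wpM2l => //; rewrite -[c^-1]mul1r ler_pdivlMr // mulrC; apply: le_trans (Hc x) Hx.
Qed.

Lemma pairing_le g u : pairing g u <= dual_norm nrm g * nrm u.
Proof.
have hs := dual_has_sup g.
have d0 : 0 <= dual_norm nrm g.
  apply: sup_upper_bound => //; exists 0; [by rewrite /= nrm0 | exact: pairing0].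
have [->|u0] := eqVneq u 0; first by rewrite pairing0 nrm0 // mulr0.
have nu0 : 0 < nrm u by rewrite lt_def nrm_ge0 // andbT; apply/eqP => /(nrm_eq0 Hn) /eqP; rewrite (negbTE u0).
have : pairing g ((nrm u)^-1 *: u) <= dual_norm nrm g.
  apply: sup_upper_bound => //; exists ((nrm u)^-1 *: u) => //=.
  rewrite (nrmZ Hn) ger0_norm; last by rewrite invr_ge0 ltW.
  by rewrite mulVf ?gt_eqF.
have -> := pairingZ g (nrm u)^-1 u.
by rewrite mulrC ler_pdivrMr.
Qed.
End Dual.
Lemma fact1 (R : realType) (k g D : R) : 0 < k -> g * D <= k / 2 * D ^+ 2 + g ^+ 2 / (2 * k).
Proof.
move=> k0.
have e : k / 2 * D ^+ 2 + g ^+ 2 / (2 * k) - g * D = (k * D - g) ^+ 2 / (2 * k).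
  by field; rewrite gt_eqF.
by rewrite -subr_ge0 e divr_ge0 ?sqr_ge0 // mulr_ge0 // ltW.
Qed.

Lemma fact2 (R : realType) (k d e q g mu : R) : 0 < k -> 0 <= d -> 0 <= e -> 0 <= q ->
  0 <= g -> 0 < mu -> k * d ^+ 2 <= e * d + q ->
  g * d <= g * e / k + g ^+ 2 / (2 * mu) + mu * q / (2 * k).
Proof.
move=> k0 d0 e0 q0 g0 mu0 H.
have t1 : 0 <= g ^+ 2 / (2 * mu) by rewrite divr_ge0 ?sqr_ge0 // mulr_ge0 // ltW.
have t2 : 0 <= mu * q / (2 * k) by rewrite divr_ge0 ?mulr_ge0 // ltW.
have [kd|kd] := lerP (k * d) e.
  have : d <= e / k by rewrite ler_pdivlMr // mulrC.
  move=> de; have : g * d <= g * e / k by rewrite -mulrA ler_wpM2l.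
  move=> h; lra.
pose w := d - e / k.
have w0 : 0 < w by rewrite subr_gt0 ltr_pdivrMr // mulrC.
have ew : e / k * k = e by rewrite divfK // gt_eqF.
have kw : k * w ^+ 2 <= q.
  have : k * d * w <= q.
    have -> : k * d * w = k * d ^+ 2 - e * d by rewrite /w; field; rewrite gt_eqF.
    lra.
  have : w <= d by rewrite /w lerBlDr lerDl divr_ge0 // ltW.
  by move=> wd h; apply: le_trans h; rewrite expr2 mulrA ler_pM2r // ler_pM2l.
have w2 : w ^+ 2 <= q / k by rewrite ler_pdivlMr // mulrC.
have : g * w <= mu / 2 * w ^+ 2 + g ^+ 2 / (2 * mu) by apply: fact1.
have : mu / 2 * w ^+ 2 <= mu * q / (2 * k).
  have -> : mu * q / (2 * k) = mu / 2 * (q / k) by field; rewrite gt_eqF.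
  by rewrite ler_wpM2l // divr_ge0 // ltW.
have -> : g * d = g * e / k + g * w by rewrite /w mulrBr mulrA addrC subrK.
move=> h1 h2; lra.
Qed.
Set Implicit Arguments.
Unset Strict Implicit.

Lemma pairingDl (R : realType) n (a b x : 'rV[R]_n) : pairing (a + b) x = pairing a x + pairing b x.
Proof. by rewrite /pairing -big_split; apply: eq_bigr => i _; rewrite mxE mulrDl. Qed.
Lemma pairingNl (R : realType) n (a x : 'rV[R]_n) : pairing (- a) x = - pairing a x.
Proof. by rewrite /pairing -sumrN; apply: eq_bigr => i _; rewrite mxE mulNr. Qed.
Lemma pairingBl (R : realType) n (a b x : 'rV[R]_n) : pairing (a - b) x = pairing a x - pairing b x.
Proof. by rewrite pairingDl pairingNl. Qed.
Lemma pairing0l (R : realType) n (x : 'rV[R]_n) : pairing 0 x = 0.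
Proof. by rewrite /pairing big1 // => i _; rewrite mxE mul0r. Qed.
Lemma pairing_suml (R : realType) n (I : Type) (r : seq I) (P : pred I) (F : I -> 'rV[R]_n) x :
  pairing (\sum_(i <- r | P i) F i) x = \sum_(i <- r | P i) pairing (F i) x.
Proof.
elim/big_rec2: _ => [|i y1 y2 _ H]; first exact: pairing0l.
by rewrite pairingDl H.
Qed.

Lemma conv_of (R : realType) n (X : set 'rV[R]_n) : convex_set X ->
  forall x y l, X x -> X y -> 0 <= l <= 1 -> X (l *: x + (1 - l) *: y).
Proof.
move=> HX x y l Xx Xy /andP[l0 l1].
have := HX x y (Itv01 l0 l1) (mem_set Xx) (mem_set Xy).
by rewrite inE.
Qed.

Section Core.
Variables (R : realType) (n : nat) (nrm : 'rV[R]_n -> R) (X : set 'rV[R]_n) (hr : 'rV[R]_n -> R).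
Hypothesis Hn : is_norm nrm.
Hypothesis HX : forall x y l, X x -> X y -> 0 <= l <= 1 -> X (l *: x + (1 - l) *: y).
Hypothesis Hsc : forall x y l, X x -> X y -> 0 <= l <= 1 ->
  hr (l *: x + (1 - l) *: y) <= l * hr x + (1 - l) * hr y - l * (1 - l) / 2 * nrm (x - y) ^+ 2.

Definition Psi (B : 'rV[R]_n) (beta : R) z := pairing B z + beta * hr z.

Lemma comb_sc B beta u v l : 0 <= beta -> X u -> X v -> 0 <= l <= 1 ->
  Psi B beta (l *: u + (1 - l) *: v) <=
  l * Psi B beta u + (1 - l) * Psi B beta v - l * (1 - l) / 2 * beta * nrm (u - v) ^+ 2.
Proof.
move=> b0 Xu Xv hl; rewrite /Psi pairingD !pairingZ.
have := ler_wpM2l b0 (Hsc Xu Xv hl); move=> H.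
lra.
Qed.

Lemma stepA B beta eps l x y : 0 <= beta -> 0 < l -> l <= 1 -> X x -> X y ->
  (forall z, X z -> Psi B beta y <= Psi B beta z + eps) ->
  Psi B beta y <= Psi B beta x - (1 - l) * beta / 2 * nrm (x - y) ^+ 2 + eps / l.
Proof.
move=> b0 l0 l1 Xx Xy ymin.
have hl : 0 <= l <= 1 by rewrite ltW.
have H1 := comb_sc B b0 Xx Xy hl.
have H2 := ymin _ (HX Xx Xy hl).
have e : eps = l * (eps / l) by rewrite mulrC divfK // gt_eqF.
set q := eps / l in e *.
set D := nrm (x - y) ^+ 2 in H1 *.
set a := Psi B beta y in H1 H2 *.
set b := Psi B beta x in H1 *.
set c := Psi B beta _ in H1 H2.
have : l * a <= l * (b - (1 - l) * beta / 2 * D + q) by nra.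
by rewrite ler_pM2l.
Qed.

Lemma core B E g x0 y beta e gam eps l mu x :
  0 < beta -> 0 < l -> l <= 1/2 -> 0 < mu -> 0 <= eps -> 0 <= e -> 0 <= gam ->
  X x0 -> X y -> X x ->
  (forall z, X z -> Psi (B - E) beta x0 <= Psi (B - E) beta z + 0) ->
  (forall z, X z -> Psi B beta y <= Psi B beta z + eps) ->
  (forall u, pairing E u <= e * nrm u) -> (forall u, pairing g u <= gam * nrm u) ->
  Psi B beta y + pairing g x0 <= Psi B beta x + pairing g x + (gam ^+ 2 / 2 + gam * e) / beta
     + ((gam ^+ 2 + 2 * gam * e) * l / beta + gam ^+ 2 / (2 * mu) + mu * eps / (l * beta) + eps / l).
Proof.
move=> b0 l0 l2 mu0 eps0 e0 g0 Xx0 Xy Xx x0min ymin HE Hg.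
have l1 : l <= 1 by apply: le_trans l2 _; lra.
have k0 : 0 < (1 - l) * beta by rewrite mulr_gt0 // subr_gt0; apply: le_lt_trans l2 _; lra.
set k := (1 - l) * beta in k0 *.
have hA := stepA (ltW b0) l0 l1 Xx Xy ymin.
have hA0 := stepA (ltW b0) l0 l1 Xx0 Xy ymin.
have hB := stepA (ltW b0) l0 l1 Xy Xx0 x0min.
rewrite mul0r addr0 in hB.
have nd : nrm (y - x0) = nrm (x0 - y) by rewrite -opprB nrmN.
rewrite nd in hB.
set d := nrm (x0 - y) in hA0 hB nd *.
set D := nrm (x - y) in hA *.
have d0 : 0 <= d by apply: nrm_ge0.
have D0 : 0 <= D by apply: nrm_ge0.
have hE := HE (x0 - y); rewrite pairingB -/d in hE.
move: hB; rewrite /Psi !pairingBl => hB.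
have hkd : k * d ^+ 2 <= e * d + eps / l.
  rewrite /Psi in hA0; rewrite /k; lra.
have f2 := fact2 k0 d0 e0 (divr_ge0 eps0 (ltW l0)) g0 mu0 hkd.
have f1 := fact1 gam D k0.
have hg1 := Hg (x0 - y); have hg2 := Hg (y - x).
rewrite pairingB -/d in hg1.
have nD : nrm (y - x) = D by rewrite -opprB nrmN.
rewrite pairingB nD in hg2.
have hik : k^-1 <= (1 + 2 * l) / beta.
  have l1' : 1 - l != 0 by rewrite subr_eq0 gt_eqF //; apply: le_lt_trans l2 _; lra.
  have -> : k^-1 = (1 + 2 * l) / beta - ((1 + 2 * l) * (1 - l) - 1) / k.
    by rewrite /k; field; rewrite l1' gt_eqF.
  have h2 : 0 <= l * (1 - 2 * l) by apply: mulr_ge0; lra.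
  rewrite lerBlDr lerDl; apply: divr_ge0; [lra | exact: ltW].
have lb : l * beta != 0 by rewrite mulf_neq0 // gt_eqF.
have kn0 : k != 0 by rewrite gt_eqF.
have T1 : gam ^+ 2 / (2 * k) + gam * e / k <=
    (gam ^+ 2 / 2 + gam * e) / beta + (gam ^+ 2 + 2 * gam * e) * l / beta.
  have c0 : 0 <= gam ^+ 2 / 2 + gam * e by rewrite addr_ge0 ?mulr_ge0 ?divr_ge0 ?sqr_ge0.
  have -> : gam ^+ 2 / (2 * k) + gam * e / k = (gam ^+ 2 / 2 + gam * e) * k^-1 by field.
  have -> : (gam ^+ 2 / 2 + gam * e) / beta + (gam ^+ 2 + 2 * gam * e) * l / beta =
            (gam ^+ 2 / 2 + gam * e) * ((1 + 2 * l) / beta) by field; rewrite gt_eqF.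
  exact: ler_wpM2l.
have T2 : mu * (eps / l) / (2 * k) <= mu * eps / (l * beta).
  have c0 : 0 <= mu * eps / (2 * l) by apply: divr_ge0; [apply: mulr_ge0 | apply: mulr_ge0]; lra.
  have -> : mu * (eps / l) / (2 * k) = mu * eps / (2 * l) * k^-1.
    by field; rewrite kn0 gt_eqF.
  apply: le_trans (ler_wpM2l c0 hik) _.
  have -> : mu * eps / (2 * l) * ((1 + 2 * l) / beta) =
            mu * eps / (l * beta) - mu * eps / (l * beta) * ((1 - 2 * l) / 2).
    by field; rewrite !gt_eqF.
  rewrite lerBlDr lerDl; apply: mulr_ge0; first by apply: divr_ge0; [apply: mulr_ge0 | apply: mulr_ge0]; lra.
  apply: divr_ge0; lra.
rewrite /Psi -/k in hA; lra.
Qed.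

Lemma epsmin B E x0 beta e eps : 0 < beta -> 0 < eps -> 0 <= e -> X x0 ->
  (forall z, X z -> Psi (B - E) beta x0 <= Psi (B - E) beta z + 0) ->
  (forall u, pairing E u <= e * nrm u) ->
  exists y, X y /\ forall z, X z -> Psi B beta y <= Psi B beta z + eps.
Proof.
move=> b0 eps0 e0 Xx0 x0min HE.
pose W := [set Psi B beta z | z in X].
have lb : forall z, X z -> Psi (B - E) beta x0 + pairing E x0 - e ^+ 2 / (2 * (beta / 2)) <= Psi B beta z.
  move=> z Xz.
  have h2 : (0 : R) < 1 / 2 by lra.
  have h21 : (1 / 2 : R) <= 1 by lra.
  have hB := stepA (ltW b0) h2 h21 Xz Xx0 x0min.
  rewrite mul0r addr0 in hB.
  have hE := HE (x0 - z); rewrite pairingB in hE.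
  have nd : nrm (x0 - z) = nrm (z - x0) by rewrite -opprB nrmN.
  rewrite nd in hE.
  have b2 : 0 < beta / 2 by rewrite divr_gt0.
  have f1 := fact1 e (nrm (z - x0)) b2.
  move: hB; rewrite /Psi !pairingBl => hB.
  rewrite /Psi; lra.
have hinf : has_inf W.
  split; first by exists (Psi B beta x0), x0.
  by exists (Psi (B - E) beta x0 + pairing E x0 - e ^+ 2 / (2 * (beta / 2))) => _ [z Xz <-]; apply: lb.
have [_ [y Xy <-] Hy] := inf_adherent eps0 hinf.
exists y; split => // z Xz.
have : inf W <= Psi B beta z by apply: ge_inf; [case: hinf | exists z].
move=> h; lra.
Qed.
End Core.
Set Implicit Arguments.
Unset Strict Implicit.

Lemma sum_isqrt (R : realType) (T : nat) :
  \sum_(1 <= t < T.+1) (Num.sqrt (t%:R : R))^-1 <= 2 * Num.sqrt (T%:R : R).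
Proof.
elim: T => [|T IH]; first by rewrite big_geq // sqrtr0 mulr0.
rewrite big_nat_recr //=.
set a := Num.sqrt (T.+1%:R : R); set b := Num.sqrt (T%:R : R) in IH *.
have a0 : 0 < a by rewrite sqrtr_gt0 ltr0Sn.
have b0 : 0 <= b by apply: sqrtr_ge0.
have ab : a ^+ 2 = b ^+ 2 + 1 by rewrite !sqr_sqrtr // -natr1.
have : a^-1 <= 2 * (a - b).
  rewrite -[a^-1]mul1r ler_pdivrMr //; nra.
lra.
Qed.

Lemma small_lim (R : realType) (A C K : R) : 0 <= K ->
  (forall s, 0 < s -> s <= 1/2 -> A <= C + s * K) -> A <= C.
Proof.
move=> K0 H; apply/ler_addgt0Pr => e e0.
pose s := Num.min (1/2) (e / (K + 1)).
have K1 : 0 < K + 1 by lra.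
have s0 : 0 < s by rewrite lt_min; apply/andP; split; [lra | exact: divr_gt0].
have s1 : s <= 1/2 by rewrite ge_min lexx.
have s2 : s <= e / (K + 1) by rewrite ge_min lexx orbT.
have : s * K <= e.
  apply: (@le_trans _ _ (e / (K + 1) * K)); first by rewrite ler_wpM2r.
  rewrite mulrAC ler_pdivrMr // ler_wpM2l ?ltW //; lra.
have := H s s0 s1; lra.
Qed.

Lemma sum_ct (R : realType) (r G : R) (tau T : nat) : 0 < r -> 0 < G ->
  \sum_(1 <= t < T.+1) (G ^+ 2 / 2 + G * (tau%:R * G)) / (G * Num.sqrt (t%:R * (1 + 2 * tau%:R)) / r)
   <= r * G * Num.sqrt (T%:R * (1 + 2 * tau%:R)).
Proof.
move=> r0 G0.
set q := Num.sqrt (1 + 2 * tau%:R : R).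
have tq : 0 <= (1 + 2 * tau%:R : R) by apply: addr_ge0 => //; apply: mulr_ge0.
have q0 : 0 < q by rewrite sqrtr_gt0; apply: lt_le_trans (ltr01) _; rewrite lerDl mulr_ge0.
have htau : (tau%:R : R) = (q ^+ 2 - 1) / 2 by rewrite sqr_sqrtr //; field.
rewrite sqrtrM // -/q.
rewrite (@eq_big_nat _ _ _ 1 T.+1 _ (fun t => r * G * q / 2 * (Num.sqrt (t%:R : R))^-1)); last first.
  move=> t /andP[t1 _]; rewrite sqrtrM ?ler0n // -/q.
  have st : 0 < Num.sqrt (t%:R : R) by rewrite sqrtr_gt0 ltr0n.
  rewrite htau; field.
  by rewrite !gt_eqF.
rewrite -mulr_sumr.
apply: le_trans (ler_wpM2l _ (sum_isqrt R T)) _.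
  by rewrite divr_ge0 // !mulr_ge0 // ltW.
by rewrite le_eqVlt; apply/orP; left; apply/eqP; field.
Qed.
Unset Implicit Arguments.

Theorem proposition1 (R : realType) (n : nat) (nrm : 'rV[R]_n -> R)
  (X : set 'rV[R]_n) (h : 'rV[R]_n -> \bar R)
  (Agent : Type) (ag : nat -> Agent) (S : Agent -> nat -> nat -> bool)
  (f : nat -> 'rV[R]_n -> \bar R) (x g : nat -> 'rV[R]_n)
  (r G : R) (tau T : nat) (p : 'rV[R]_n) :
  is_norm nrm ->
  closed X -> convex_set X ->
  (* regularizer *)
  lower_semicontinuous h ->
  strongly_convex_on nrm X h ->
  X `<=` dom h ->
  (exists s : 'rV[R]_n -> 'rV[R]_n,
      {within dom_subdiff h, continuous s} /\
      forall y, dom_subdiff h y -> subgrad h y (s y)) ->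
  (forall y, (0 <= h y)%E) ->
  0 < r -> 0 < G ->
  (* losses *)
  (forall t, (1 <= t <= T)%N -> convex_efun (f t)) ->
  (forall t, (1 <= t <= T)%N -> X `<=` dom_subdiff (f t)) ->
  (* available timestamps: subsets of {1,...,t-1}, nondecreasing in t *)
  (forall a t s, S a t s -> (1 <= s < t)%N) ->
  (forall a t1 t2 s, (t1 <= t2)%N -> S a t1 s -> S a t2 s) ->
  (* bounded delay: {1,...,t-tau-1} is included in S_t *)
  (forall t s, (1 <= t <= T)%N -> (1 <= s)%N -> (s + tau + 1 <= t)%N ->
     S (ag t) t s) ->
  (* DDA iterates with eta_t = r / (G sqrt (t (1 + 2 tau))) *)
  (forall t, (1 <= t <= T)%N ->
     X (x t) /\
     forall y, X y ->
       ((\sum_(1 <= s < t | S (ag t) t s) pairing (g s) (x t))%:E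
          + ((r / (G * Num.sqrt (t%:R * (1 + 2 * tau%:R))))^-1)%:E * h (x t)
        <= (\sum_(1 <= s < t | S (ag t) t s) pairing (g s) y)%:E
          + ((r / (G * Num.sqrt (t%:R * (1 + 2 * tau%:R))))^-1)%:E * h y)%E) ->
  (* revealed subgradients, bounded in dual norm *)
  (forall t, (1 <= t <= T)%N -> subgrad (f t) (x t) (g t)) ->
  (forall t, (1 <= t <= T)%N -> dual_norm nrm (g t) <= G) ->
  X p -> (h p <= (r ^+ 2)%:E)%E ->
  (\sum_(1 <= t < T.+1) (f t (x t) - f t p)
     <= (2 * r * G * Num.sqrt (T%:R * (1 + 2 * tau%:R)))%:E)%E.
Proof.
move=> Hn HXc HXconv hlsc hsc HXdom hsel h0 r0 G0 fconv fdom Srange Smono Sdelay HDDA Hsub Hdual Xp hp.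
have [->|T0] := eqVneq T 0%N.
  by rewrite big_geq // mul0r sqrtr0 mulr0.
have T1 : (1 <= T)%N by rewrite lt0n.
have HX := conv_of HXconv.
pose hr z := fine (h z).
have hE : forall z, X z -> h z = (hr z)%:E.
  move=> z Xz; rewrite /hr fineK // fin_numE; apply/andP; split.
    by rewrite gt_eqF // (lt_le_trans ltNy0 (h0 z)).
  by rewrite lt_eqF //; exact: HXdom.
have hr0 : forall z, X z -> 0 <= hr z by move=> z Xz; have := h0 z; rewrite hE // lee_fin.
have Hsc : forall x y l, X x -> X y -> 0 <= l <= 1 ->
  hr (l *: x + (1 - l) *: y) <= l * hr x + (1 - l) * hr y - l * (1 - l) / 2 * nrm (x - y) ^+ 2.
  move=> x1 y1 l Xx Xy hl; have := hsc x1 y1 l Xx Xy hl.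
  by rewrite (hE _ (HX _ _ _ Xx Xy hl)) (hE _ Xx) (hE _ Xy) -!EFinM -EFinD lee_fin.
pose beta t := (r / (G * Num.sqrt (t%:R * (1 + 2 * tau%:R))))^-1.
have tq : 0 < (1 + 2 * tau%:R : R) by apply: lt_le_trans (ltr01) _; rewrite lerDl mulr_ge0.
have betaE : forall t, beta t = G * Num.sqrt (t%:R * (1 + 2 * tau%:R)) / r.
  by move=> t; rewrite /beta invf_div.
have beta0 : forall t, (1 <= t)%N -> 0 < beta t.
  move=> t t1; rewrite betaE divr_gt0 // mulr_gt0 // sqrtr_gt0 mulr_gt0 // ltr0n; exact: t1.
have betamono : forall t1 t2, (t1 <= t2)%N -> beta t1 <= beta t2.
  move=> a1 a2 t12; rewrite !betaE ler_pM2r ?invr_gt0 // ler_pM2l // ler_sqrt; last by rewrite mulr_ge0 // ltW.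
  by rewrite ler_pM2r // ler_nat.
pose Bv t := \sum_(1 <= s < t) g s.
pose Ev t := \sum_(1 <= s < t | ~~ S (ag t) t s) g s.
have BE : forall t, Bv t - Ev t = \sum_(1 <= s < t | S (ag t) t s) g s.
  by move=> t; rewrite /Bv (bigID (fun s => S (ag t) t s)) /= addrK.
have Gbound : forall t u, (1 <= t <= T)%N -> pairing (g t) u <= G * nrm u.
  move=> t u Ht; apply: le_trans (pairing_le Hn _ _) _.
  by rewrite ler_wpM2r ?(nrm_ge0 Hn) // Hdual.
have Ebound : forall t u, (1 <= t <= T)%N -> pairing (Ev t) u <= (tau%:R * G) * nrm u.
  move=> t u /andP[t1 tT]; rewrite pairing_suml.
  have c0 : 0 <= G * nrm u by rewrite mulr_ge0 ?(nrm_ge0 Hn) ?ltW.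
  apply: (@le_trans _ _ (\sum_(1 <= s < t | ~~ S (ag t) t s) (G * nrm u))).
    rewrite big_nat_cond [X in _ <= X]big_nat_cond; apply: ler_sum => s /andP[/andP[s1 st] _].
    by apply: Gbound; rewrite s1 /=; apply: ltnW; apply: leq_trans st tT.
  rewrite (@big_cat_nat _ _ _ (maxn 1 (t - tau))) /=; [|lia|lia].
  rewrite big_nat_cond big1 ?add0r; last first.
    move=> s /andP[/andP[s1 sm] nS]; exfalso; move/negP: nS; apply.
    by apply: Sdelay; [rewrite t1 | |lia].
  apply: (@le_trans _ _ (\sum_(maxn 1 (t - tau) <= s < t) (G * nrm u))).
    by rewrite big_mkcond; apply: ler_sum => s _; case: ifP.
  rewrite sumr_const_nat -mulrA mulr_natl.
  by apply: ler_wpMn2l => //; lia.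
have Hmin : forall t, (1 <= t <= T)%N -> forall z, X z ->
    Psi hr (Bv t - Ev t) (beta t) (x t) <= Psi hr (Bv t - Ev t) (beta t) z + 0.
  move=> t Ht z Xz; have [Xxt Hd] := HDDA t Ht; have := Hd z Xz.
  by rewrite /Psi BE !pairing_suml addr0 (hE _ Xxt) (hE _ Xz) -!EFinM -!EFinD lee_fin.
pose A := G ^+ 2 + 2 * G * (tau%:R * G).
pose M := (A + 1) / beta 1%N + G ^+ 2 / 2 + 1.
pose K := T%:R * M.
pose LHSr := \sum_(1 <= t < T.+1) (pairing (g t) (x t) - pairing (g t) p).
pose RHSr := 2 * r * G * Num.sqrt (T%:R * (1 + 2 * tau%:R)).
have A0 : 0 <= A by rewrite addr_ge0 ?sqr_ge0 // !mulr_ge0 // ltW.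
have b10 := beta0 1%N (leqnn 1).
have M0 : 0 <= M.
  have : 0 <= (A + 1) / beta 1%N by apply: divr_ge0; [lra | exact: ltW].
  have : 0 <= G ^+ 2 / 2 by apply: divr_ge0; [exact: sqr_ge0 | lra].
  rewrite /M; lra.
have K0 : 0 <= K by rewrite mulr_ge0.
have e0 : 0 <= tau%:R * G by rewrite mulr_ge0 // ltW.
have key : forall s, 0 < s -> s <= 1/2 -> LHSr <= RHSr + s * K.
  move=> s s0 s12.
  pose eps := s ^+ 3.
  have eps0 : 0 < eps by rewrite exprn_gt0.
  have ey : forall t, exists y, (1 <= t <= T)%N -> X y /\
      forall z, X z -> Psi hr (Bv t) (beta t) y <= Psi hr (Bv t) (beta t) z + eps.
    move=> t; case: (boolP (1 <= t <= T)%N) => Ht; last by exists 0.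
    have [Xxt _] := HDDA t Ht.
    have [y Hy] := epsmin Hn HX Hsc (beta0 t (proj1 (andP Ht))) eps0 e0 Xxt (Hmin t Ht)
      (fun u => Ebound t u Ht).
    by exists y.
  have [yf Hyf] := choice ey.
  pose yy t := if (t <= T)%N then yf t else p.
  pose beta' t := beta (minn t T).
  pose Q t := Psi hr (Bv t) (beta' t) (yy t).
  have Xyy : forall t, (1 <= t)%N -> X (yy t).
    move=> t t1; rewrite /yy; case: ifP => // tT; exact: (Hyf t (introT andP (conj t1 tT))).1.
  pose c t := (G ^+ 2 / 2 + G * (tau%:R * G)) / beta t.
  pose sl t := A * s / beta t + G ^+ 2 / (2 * s^-1) + s^-1 * eps / (s * beta t) + eps / s.
  have step : forall t, (1 <= t <= T)%N -> Q t + pairing (g t) (x t) <= Q t.+1 + (c t + sl t).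
    move=> t Ht; have /andP[t1 tT] := Ht.
    have smu : 0 < s^-1 by rewrite invr_gt0.
    have := core Hn HX Hsc
      (beta0 t t1) s0 s12 smu (ltW eps0) e0 (ltW G0)
      (HDDA t Ht).1 (Hyf t Ht).1 (Xyy t.+1 (leqW t1)) (Hmin t Ht) (Hyf t Ht).2
      (fun u => Ebound t u Ht) (fun u => Gbound t u Ht).
    have Qt : Q t = Psi hr (Bv t) (beta t) (yf t) by rewrite /Q /yy /beta' tT (minn_idPl tT).
    have bb : beta t <= beta' t.+1 by apply: betamono; rewrite leq_min leqnSn tT.
    have hz := hr0 _ (Xyy t.+1 (leqW t1)).
    have bbz : beta t * hr (yy t.+1) <= beta' t.+1 * hr (yy t.+1) by apply: ler_wpM2r.
    have BS : Bv t.+1 = Bv t + g t by rewrite /Bv big_nat_recr.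
    rewrite Qt /Q /Psi BS pairingDl /c /sl /A.
    lra.
  have tele : forall m, (m <= T)%N -> \sum_(1 <= t < m.+1) pairing (g t) (x t) + Q 1%N <=
      Q m.+1 + \sum_(1 <= t < m.+1) (c t + sl t).
    elim => [|m IH] hm; first by rewrite !big_geq // add0r addr0.
    rewrite [X in X + Q 1%N <= _]big_nat_recr // [X in _ <= _ + X]big_nat_recr //=.
    have := IH (ltnW hm); have := step m.+1 (introT andP (conj (ltn0Sn m) hm)).
    lra.
  have := tele T (leqnn T).
  have Q1 : 0 <= Q 1%N.
    rewrite /Q /Psi /Bv big_geq // pairing0l add0r /beta' (minn_idPl T1).
    by apply: mulr_ge0; [apply: ltW; apply: beta0 | apply: hr0; apply: Xyy].
  have QT : Q T.+1 = \sum_(1 <= t < T.+1) pairing (g t) p + beta T * hr p.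
    rewrite /Q /Psi /yy ltnn /beta' /Bv pairing_suml.
    by have -> : minn T.+1 T = T by apply/minn_idPr.
  have hpr : hr p <= r ^+ 2 by rewrite -lee_fin -hE.
  have bT : beta T * hr p <= r * G * Num.sqrt (T%:R * (1 + 2 * tau%:R)).
    apply: (@le_trans _ _ (beta T * r ^+ 2)); first by rewrite ler_wpM2l // ltW // beta0.
    rewrite betaE le_eqVlt; apply/orP; left; apply/eqP; by field; rewrite gt_eqF.
  have sc : \sum_(1 <= t < T.+1) c t <= r * G * Num.sqrt (T%:R * (1 + 2 * tau%:R)).
    apply: le_trans (sum_ct tau T r0 G0).
    by rewrite le_eqVlt; apply/orP; left; apply/eqP; apply: eq_bigr => t _; rewrite /c betaE.
  have ssl : \sum_(1 <= t < T.+1) sl t <= s * K.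
    apply: (@le_trans _ _ (\sum_(1 <= t < T.+1) (s * M))).
      rewrite big_nat_cond [X in _ <= X]big_nat_cond; apply: ler_sum => t /andP[/andP[t1 _] _].
      have bt := beta0 t t1.
      have ib : (beta t)^-1 <= (beta 1%N)^-1 by rewrite lef_pV2 ?posrE // betamono.
      have ib0 : 0 <= (beta t)^-1 by rewrite invr_ge0 ltW.
      have h1 : A * s * (beta t)^-1 <= A * s * (beta 1%N)^-1 by rewrite ler_wpM2l // mulr_ge0 // ltW.
      have h2 : s * (beta t)^-1 <= s * (beta 1%N)^-1 by rewrite ler_wpM2l // ltW.
      have e1 : G ^+ 2 / (2 * s^-1) = s * G ^+ 2 / 2 by field; rewrite gt_eqF.
      have e2 : s^-1 * eps / (s * beta t) = s * (beta t)^-1 by rewrite /eps; field; rewrite !gt_eqF.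
      have e3 : eps / s = s ^+ 2 by rewrite /eps; field; rewrite gt_eqF.
      have s2 : s ^+ 2 <= s by rewrite expr2 ger_pMl //; lra.
      rewrite /sl e1 e2 e3 /M.
      have e4 : A * s / beta t = A * s * (beta t)^-1 by [].
      have e5 : s * ((A + 1) / beta 1%N + G ^+ 2 / 2 + 1) = A * s * (beta 1%N)^-1 + s * (beta 1%N)^-1 + s * G ^+ 2 / 2 + s.
        by field; rewrite gt_eqF.
      rewrite e5; lra.
    by rewrite sumr_const_nat subn1 /= /K mulrCA mulr_natl.
  rewrite big_split /= QT /LHSr sumrB.
  move=> H; rewrite /RHSr; lra.
have := small_lim K0 key.
move=> H.
apply: (@le_trans _ _ (\sum_(1 <= t < T.+1) (pairing (g t) (x t) - pairing (g t) p)%:E)); last first.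
  by rewrite sumEFin lee_fin.
rewrite big_nat_cond [X in (_ <= X)%E]big_nat_cond; apply: lee_sum => t /andP[/andP[t1 tT] _].
have tT' : (t <= T)%N by lia.
have [fin Hs] := Hsub t (introT andP (conj t1 tT')).
have := Hs p; rewrite pairingB.
rewrite -(fineK fin).
case: (f t p) => [rp | | ] /=.
- rewrite -EFinD !lee_fin => hh; lra.
- by move=> _; rewrite addeNy leNye.
- by rewrite -EFinD leeNy_eq.
Qed.
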